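(* Let $I\in[0,1)$ and let $l\ge 1$ be an integer. For integers $m\ge -1$ and $n\in\{0,1,\dots,l\}$, let $Q(l,m,n)$ be the probability that the random walk started at $[m,n]^T$ (defined in the context) hits the line $\mathcal{L}_1=\{[m',n']^T : m'=-1\}$ before hitting the line $\mathcal{L}_2=\{[m',n']^T: n'=l\}$. Then $$Q(l,m,n)=\begin{cases}\sum_{i=0}^{l-n-1} a_{i,m}(1-I)^i I^{m+1+i}, & \text{if } m\ge 0,\ 0\le n<l,\\ 1, & \text{if } m=-1,\ 0\le n<l,\\ 0, & \text{if } m>0,\ n=l,\end{cases}$$ where the coefficients $a_{i,m}$ ($i\ge 0$, $m\ge 0$) are given by $$a_{i,m}=\begin{cases} 1, & i=0,\\ 1+m, & i=1,\\ C_i, & m=0,\\ C_{i+1}, & m=1,\\ C_{i+1}+\sum_{k=1}^{i-2} S_k\big(C_{i+1-k}\big)+S_{i-1}\big(1+j_{i-1}\big), & i>1 \text{ and } m>1.\end{cases}$$ Here $C_i=\frac{1}{i+1}\binom{2i}{i}=\frac{(2i)!}{(i+1)!\,i!}$ is the $i$-th Catalan number, and for $k\ge1$ and a summand $f$ (possibly depending on $j_k$), $S_k(f)$ denotes the nested sum $$S_k(f)=\sum_{j_1=3}^{m+1}\sum_{j_2=3}^{j_1+1}\cdots\sum_{j_k=3}^{j_{k-1}+1} f,$$ i.e. the sum over all integer tuples $(j_1,\dots,j_k)$ with $3\le j_1\le m+1$ and $3\le j_r\le j_{r-1}+1$ for $2\le r\le k$. (So, for instance, $S_1(C_i)=\sum_{j_1=3}^{m+1}C_i$,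 $S_2(C_{i-1})=\sum_{j_1=3}^{m+1}\sum_{j_2=3}^{j_1+1}C_{i-1}$, the last constant term is $S_{i-2}(C_3)$, and the final term is $S_{i-1}(1+j_{i-1})$.)
   Context: Fix $I\in[0,1)$. Let $\delta_1,\delta_2,\dots$ be i.i.d. random vectors in $\mathbb{Z}^2$ with $\delta_t=[-1,0]^T$ with probability $I$ and $\delta_t=[1,1]^T$ with probability $1-I$. For a starting point $[m,n]^T$ define $s_T=[m,n]^T+\sum_{t=1}^T\delta_t$ for $T\ge 0$ (so $s_0=[m,n]^T$). Let $\mathcal{L}_1=\{[m',n']^T: m'=-1\}$ and, for a positive integer $l$, $\mathcal{L}_2=\{[m',n']^T: n'=l\}$. The probability of hitting $\mathcal{L}_1$ before $\mathcal{L}_2$ is $$Q(l,m,n)=\sum_{T=0}^{\infty}\Pr\big(s_T\in\mathcal{L}_1,\ s_{T'}\notin\mathcal{L}_1\cup\mathcal{L}_2\ \forall\, T'<T\big).$$ (Interpretation: $m$ is the number of blocks by which an attacker's branch lags behind an honest branch, $n$ the number of blocks the honest branch has grown; each new block goes to the attacker with probability $I$, and the attacker wins if its branch surpasses the honest one before the honest branch has grown by $l$ blocks.) *)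

(* Defs.v *)
From Stdlib Require Import Reals ZArith List Arith.
From Coquelicot Require Import Coquelicot.
Import ListNotations.
Open Scope R_scope.

(** Finite sum of g j for j = a, a+1, ..., b (empty if b < a). *)
Definition rsum (a b : nat) (g : nat -> R) : R :=
  fold_right Rplus 0 (map g (seq a (S b - a))).

(** All step sequences of length T ([false] = attacker step [-1,0]^T,
    [true] = honest step [1,1]^T). *)
Fixpoint paths (T : nat) : list (list bool) :=
  match T with
  | O => [ [] ]
  | S T' => map (cons false) (paths T') ++ map (cons true) (paths T')
  end.

Definition step (b : bool) : Z * Z := if b then (1%Z, 1%Z) else ((-1)%Z, 0%Z).

Definition path_prob (I : R) (w : list bool) : R :=
  fold_right Rmult 1 (map (fun b : bool => if b then 1 - I else I) w).

Definition pos (m n : Z) (w : list bool) (k : nat) : Z * Z :=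
  fold_left (fun p b => ((fst p + fst (step b))%Z, (snd p + snd (step b))%Z))
            (firstn k w) (m, n).

Definition inL1 (p : Z * Z) : bool := Z.eqb (fst p) (-1).
Definition inL2 (l : Z) (p : Z * Z) : bool := Z.eqb (snd p) l.

Definition first_hit_L1 (l m n : Z) (T : nat) (w : list bool) : bool :=
  inL1 (pos m n w T) &&
  forallb (fun k => negb (inL1 (pos m n w k) || inL2 l (pos m n w k))) (seq 0 T).

Definition hit_term (I : R) (l m n : Z) (T : nat) : R :=
  fold_right Rplus 0
    (map (fun w => if first_hit_L1 l m n T w then path_prob I w else 0) (paths T)).

Definition Q (I : R) (l m n : Z) : R := Series (hit_term I l m n).

Definition catalan (i : nat) : R :=
  INR (fact (2 * i)) / (INR (fact (i + 1)) * INR (fact i)).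

(** Nested sum: nsum k ub f = sum_{j_1=3}^{ub} sum_{j_2=3}^{j_1+1} ...
    sum_{j_k=3}^{j_{k-1}+1} f j_k   (for k >= 1). *)
Fixpoint nsum (k ub : nat) (f : nat -> R) : R :=
  match k with
  | O => 0
  | S k' => rsum 3 ub (fun j => match k' with
                               | O => f j
                               | _ => nsum k' (j + 1) f
                               end)
  end.

Definition Snest (m k : nat) (f : nat -> R) : R := nsum k (m + 1) f.

Definition coef_a (i m : nat) : R :=
  if Nat.eqb i 0 then 1
  else if Nat.eqb i 1 then 1 + INR m
  else if Nat.eqb m 0 then catalan i
  else if Nat.eqb m 1 then catalan (i + 1)
  else catalan (i + 1)
       + rsum 1 (i - 2) (fun k => Snest m k (fun _ => catalan (i + 1 - k)))
       + Snest m (i - 1) (fun j => 1 + INR j).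

(* Main.v *)
Require Import Defs.
From Stdlib Require Import Reals ZArith List Arith Lia Lra Bool.
From Coquelicot Require Import Coquelicot.
Import ListNotations.
Open Scope R_scope.

Lemma fr_app (l1 l2 : list R) : fold_right Rplus 0 (l1 ++ l2) = fold_right Rplus 0 l1 + fold_right Rplus 0 l2.
Proof. induction l1; simpl; [ring| rewrite IHl1; ring]. Qed.

Lemma rsum_cons a b g : (a <= b)%nat -> rsum a b g = g a + rsum (S a) b g.
Proof. intro H. unfold rsum. replace (S b - a)%nat with (S (b - a)) by lia. simpl.
  replace (b - a)%nat with (S b - S a)%nat by lia. reflexivity. Qed.

Lemma rsum_snoc a b g : (a <= S b)%nat -> rsum a (S b) g = rsum a b g + g (S b).
Proof. intro H. unfold rsum. replace (S (S b) - a)%nat with (S (S b - a)) by lia.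
  rewrite seq_S, map_app, fr_app. cbn [map fold_right]. replace (a + (S b - a))%nat with (S b) by lia.
  ring. Qed.

Lemma rsum_shift a b g : rsum (S a) (S b) g = rsum a b (fun k => g (S k)).
Proof. unfold rsum. replace (S (S b) - S a)%nat with (S b - a)%nat by lia.
  rewrite <- seq_shift, map_map. reflexivity. Qed.

Lemma rsum_plus a b f g : rsum a b (fun k => f k + g k) = rsum a b f + rsum a b g.
Proof. unfold rsum. induction (seq a (S b - a)); simpl; [ring| rewrite IHl; ring]. Qed.

Lemma rsum_ext a b f g : (forall k, (a <= k <= b)%nat -> f k = g k) -> rsum a b f = rsum a b g.
Proof. intro H. unfold rsum. f_equal. apply map_ext_in. intros k Hk. apply in_seq in Hk. apply H. lia. Qed.

Lemma rsum_zero a b : rsum a b (fun _ => 0) = 0.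
Proof. unfold rsum. induction (seq a (S b - a)); simpl; [ring| rewrite IHl; ring]. Qed.

Lemma nsum_S k u f : (2 <= u)%nat ->
  nsum (S k) (S u) f = nsum (S k) u f + match k with O => f (S u) | _ => nsum k (S (S u)) f end.
Proof. intro H. simpl nsum at 1. rewrite rsum_snoc by lia. simpl nsum at 2.
  destruct k; [reflexivity|]. f_equal. f_equal. lia. Qed.

Lemma nsum_2 k f : nsum (S k) 2 f = 0.
Proof. reflexivity. Qed.

(* ballot numbers *)
Definition B (i m : nat) : R :=
  INR (m + 1) * INR (fact (m + 2 * i)) / (INR (fact i) * INR (fact (m + i + 1))).

Ltac fct := repeat (rewrite ?fact_simpl, ?mult_INR, ?S_INR).

Lemma B_0 m : B 0 m = 1.
Proof. unfold B. replace (m + 2*0)%nat with m by lia. replace (m+0+1)%nat with (S m) by lia.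
  rewrite fact_simpl, mult_INR. simpl fact. replace (m+1)%nat with (S m) by lia.
  pose proof (INR_fact_neq_0 m). assert (INR (S m) <> 0) by (apply not_0_INR; lia).
  change (INR 1) with 1. field. split; auto. Qed.

Lemma B_rec i m : B (S i) (S m) = B (S i) m + B i (S (S m)).
Proof. unfold B.
  replace (S m + 2 * S i)%nat with (S (S (S (m + 2*i)))) by lia.
  replace (m + 2 * S i)%nat with (S (S (m + 2*i))) by lia.
  replace (S (S m) + 2 * i)%nat with (S (S (m + 2*i))) by lia.
  replace (S m + S i + 1)%nat with (S (S (S (m+i)))) by lia.
  replace (m + S i + 1)%nat with (S (S (m+i))) by lia.
  replace (S (S m) + i + 1)%nat with (S (S (S (m+i)))) by lia.
  replace (S m + 1)%nat with (S (S m)) by lia.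
  replace (m + 1)%nat with (S m) by lia.
  replace (S (S m) + 1)%nat with (S (S (S m))) by lia.
  rewrite !fact_simpl, !mult_INR.
  pose proof (INR_fact_neq_0 i). pose proof (INR_fact_neq_0 (m+i)).
  pose proof (INR_fact_neq_0 (m+2*i)).
  rewrite !S_INR, !plus_INR, !mult_INR. simpl (INR 2).
  pose proof (pos_INR m). pose proof (pos_INR i).
  field. repeat split; try lra. Qed.

Lemma B_m0 i : B (S i) 0 = B i 1.
Proof. unfold B.
  replace (0 + 2 * S i)%nat with (S (S (2*i))) by lia.
  replace (1 + 2 * i)%nat with (S (2*i)) by lia.
  replace (0 + S i + 1)%nat with (S (S i)) by lia.
  replace (1 + i + 1)%nat with (S (S i)) by lia.
  replace (0 + 1)%nat with 1%nat by lia. replace (1 + 1)%nat with 2%nat by lia.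
  rewrite !(fact_simpl (S (2*i))), !(fact_simpl (2*i)), (fact_simpl i), !mult_INR.
  pose proof (INR_fact_neq_0 i). pose proof (INR_fact_neq_0 (2*i)).
  pose proof (INR_fact_neq_0 (S (S i))).
  set (k := (2*i)%nat) in *. assert (Hk : INR k = 2 * INR i) by (unfold k; rewrite mult_INR; reflexivity).
  rewrite !S_INR, Hk. change (INR 1) with 1. change (INR 2) with 2.
  pose proof (pos_INR i).
  change (INR 0) with 0. field. repeat split; try lra. Qed.

Lemma B_1 m : B 1 m = 1 + INR m.
Proof. unfold B. replace (m + 2*1)%nat with (S (S m)) by lia. replace (m+1+1)%nat with (S (S m)) by lia.
  replace (m+1)%nat with (S m) by lia. change (fact 1) with 1%nat. change (INR 1) with 1.
  pose proof (INR_fact_neq_0 (S (S m))). rewrite S_INR. field. auto. Qed.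

Lemma catalan_B i : catalan i = B i 0.
Proof. unfold catalan, B. replace (0 + 2*i)%nat with (2*i)%nat by lia. replace (0+i+1)%nat with (i+1)%nat by lia. replace (0+1)%nat with 1%nat by lia. change (INR 1) with 1.
  pose proof (INR_fact_neq_0 i). pose proof (INR_fact_neq_0 (i+1)). field. auto. Qed.

Lemma catalan_B1 i : catalan (S i) = B i 1.
Proof. rewrite catalan_B, B_m0. reflexivity. Qed.

Definition G (j m : nat) : R :=
  catalan (S (S j) + 1) + rsum 1 j (fun k => nsum k (m+1) (fun _ => catalan (S (S j) + 1 - k)))
  + nsum (S j) (m+1) (fun x => 1 + INR x).

Lemma G_1 j : G j 1 = catalan (S (S j) + 1).
Proof. unfold G. rewrite (rsum_ext 1 j _ (fun _ => 0)). rewrite rsum_zero.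
  rewrite (nsum_2 j). ring.
  intros k Hk. destruct k. lia. reflexivity. Qed.

Lemma G_step j m : (1 <= m)%nat -> G j (S m) = G j m +
  match j with O => 1 + INR (S (S m)) | S j' => G j' (S (S m)) end.
Proof. intro Hm. unfold G at 1.
  pose (E := fun k => match k with 1%nat => catalan (S (S j) + 1 - 1) | S k' => nsum k' (S (S (m+1))) (fun _ => catalan (S (S j) + 1 - k)) | O => 0 end).
  rewrite (rsum_ext 1 j _ (fun k => nsum k (m+1) (fun _ => catalan (S (S j) + 1 - k)) + E k)).
  2:{ intros k Hk. destruct k. lia. change (S m + 1)%nat with (S (m+1)). rewrite nsum_S by lia.
      destruct k; reflexivity. }
  rewrite rsum_plus. change (S m + 1)%nat with (S (m+1)). rewrite nsum_S by lia.
  unfold G. destruct j as [|j'].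
  - change (rsum 1 0 ?f) with 0. replace (S (m+1)) with (S (S m)) by lia. ring.
  - rewrite (rsum_cons 1 (S j') E) by lia. rewrite (rsum_shift 1 j').
    unfold E.
    replace (S (S (m+1))) with (S (S m) + 1)%nat by lia.
    erewrite (rsum_ext 1 j' _ (fun k => nsum k (S (S m) + 1) (fun _ => catalan (S (S j') + 1 - k)))).
    replace (S (S (S j')) + 1 - 1)%nat with (S (S j') + 1)%nat by lia. ring. intros k Hk. destruct k. lia. reflexivity. Qed.

Lemma G_B j m : (1 <= m)%nat -> G j m = B (S (S j)) m.
Proof. revert m. induction j as [|j IH]; intros m Hm; induction m as [|m IHm]; try lia;
  (destruct m as [|m]; [rewrite G_1, Nat.add_1_r; apply catalan_B1|]);
  rewrite G_step by lia; rewrite IHm by lia; rewrite (B_rec (S _) (S m)).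
  - rewrite B_1. reflexivity.
  - rewrite IH by lia. reflexivity.
Qed.

Lemma coef_B i m : coef_a i m = B i m.
Proof. destruct i as [|[|j]].
  - rewrite B_0. reflexivity.
  - rewrite B_1. reflexivity.
  - destruct m as [|[|m']].
    + apply catalan_B.
    + unfold coef_a; cbn [Nat.eqb]. rewrite Nat.add_1_r. apply catalan_B1.
    + rewrite <- G_B by lia. unfold coef_a. cbn [Nat.eqb]. unfold G, Snest.
      replace (S (S j) - 2)%nat with j by lia. replace (S (S j) - 1)%nat with (S j) by lia.
      reflexivity.
Qed.

Fixpoint sN (d : nat) (g : nat -> R) : R := match d with O => 0 | S d' => sN d' g + g d' end.

Lemma sN_shift d g : sN (S d) g = g O + sN d (fun i => g (S i)).
Proof. induction d; simpl in *. ring. rewrite IHd. ring. Qed.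
Lemma sN_scal c d g : c * sN d g = sN d (fun i => c * g i).
Proof. induction d; simpl. ring. rewrite <- IHd. ring. Qed.
Lemma sN_plus d f g : sN d f + sN d g = sN d (fun i => f i + g i).
Proof. induction d; simpl. ring. rewrite <- IHd. ring. Qed.
Lemma sN_ext d f g : (forall i, f i = g i) -> sN d f = sN d g.
Proof. intro H. induction d; simpl. ring. rewrite IHd, H. ring. Qed.
Lemma fr_seq d g : fold_right Rplus 0 (map g (seq 0 d)) = sN d g.
Proof. induction d. reflexivity. rewrite seq_S, map_app, fr_app, IHd. simpl. ring. Qed.

Definition W (I : R) (m d : nat) : R := sN d (fun i => B i m * (1 - I) ^ i * I ^ (m + 1 + i)).

Lemma W0 I d : W I 0 (S d) = I + (1 - I) * W I 1 d.
Proof. unfold W. rewrite sN_shift, sN_scal. rewrite B_0. f_equal. simpl. ring.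
  apply sN_ext. intro i. rewrite B_m0. replace (0 + 1 + S i)%nat with (1 + 1 + i)%nat by lia.
  simpl. ring. Qed.

Lemma WS I m d : W I (S m) (S d) = I * W I m (S d) + (1 - I) * W I (S (S m)) d.
Proof. unfold W. rewrite !sN_shift, !sN_scal.
  rewrite Rmult_plus_distr_l, (sN_scal I), Rplus_assoc, sN_plus.
  rewrite !B_0. f_equal. replace (S m + 1 + 0)%nat with (S (m + 1 + 0)) by lia. simpl. ring.
  apply sN_ext. intro i. rewrite B_rec.
  replace (S m + 1 + S i)%nat with (S (m + 1 + S i)) by lia.
  replace (S (S m) + 1 + i)%nat with (S (m + 1 + S i)) by lia. simpl. ring. Qed.

Lemma is_series_zero : is_series (fun _ : nat => 0) 0.
Proof.
  unfold is_series.
  apply filterlim_ext with (fun _ => 0).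
  - intro n. induction n. rewrite sum_O. reflexivity. rewrite sum_Sn, <- IHn. unfold plus; simpl. ring.
  - apply filterlim_const.
Qed.
Lemma is_series_cons (a : nat -> R) (L : R) : is_series (fun k => a (S k)) L -> is_series a (a O + L).
Proof.
  intro H. apply is_series_decr_1.
  change (is_series (fun k => a (S k)) (a O + L + - a O)).
  replace (a O + L + - a O) with L by ring. exact H.
Qed.
Lemma is_series_lin (a b c : nat -> R) la lb x y : is_series a la -> is_series b lb ->
  (forall k, c k = x * a k + y * b k) -> is_series c (x * la + y * lb).
Proof. intros Ha Hb Hc.
  pose proof (is_series_plus _ _ _ _ (is_series_scal x _ _ Ha) (is_series_scal y _ _ Hb)) as H.
  apply is_series_ext with (2 := H). intro k. rewrite Hc. reflexivity. Qed.

Lemma pos_S m n b w k : Defs.pos m n (b::w) (S k) = Defs.pos (m + fst (step b))%Z (n + snd (step b))%Z w k.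
Proof. reflexivity. Qed.

Lemma forallb_shift (P : nat -> bool) T : forallb P (seq 1 T) = forallb (fun k => P (S k)) (seq 0 T).
Proof. rewrite <- seq_shift. induction (seq 0 T); simpl; congruence. Qed.

Lemma fh_S l m n T b w : first_hit_L1 l m n (S T) (b::w) =
  (negb (inL1 (m,n) || inL2 l (m,n)) && first_hit_L1 l (m + fst (step b))%Z (n + snd (step b))%Z T w)%bool.
Proof. unfold first_hit_L1. rewrite pos_S. change (seq 0 (S T)) with (0%nat :: seq 1 T).
  cbn [forallb]. rewrite forallb_shift. change (Defs.pos m n (b :: w) 0) with (m, n).
  destruct (negb (inL1 (m, n) || inL2 l (m, n))); destruct (inL1 _); reflexivity. Qed.

Lemma fr_zero {A} (l : list A) : fold_right Rplus 0 (map (fun _ => 0) l) = 0.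
Proof. induction l; simpl. reflexivity. rewrite IHl. ring. Qed.
Lemma fr_scal {A} c (g : A -> R) l : c * fold_right Rplus 0 (map g l) = fold_right Rplus 0 (map (fun x => c * g x) l).
Proof. induction l; simpl. ring. rewrite <- IHl. ring. Qed.

Lemma ht_S I l m n T : hit_term I l m n (S T) =
  if inL1 (m,n) || inL2 l (m,n) then 0
  else I * hit_term I l (m - 1) n T + (1 - I) * hit_term I l (m + 1) (n + 1) T.
Proof. unfold hit_term. cbn [paths]. rewrite map_app, fr_app, !map_map.
  destruct (inL1 (m,n) || inL2 l (m,n)) eqn:E.
  - rewrite (map_ext _ (fun _ => 0)), (map_ext (fun x => if first_hit_L1 l m n (S T) (true :: x) then _ else _) (fun _ => 0)), !fr_zero. ring.
    intro w. rewrite fh_S, E. reflexivity.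
    intro w. rewrite fh_S, E. reflexivity.
  - rewrite !fr_scal. f_equal; f_equal; apply map_ext; intro w; rewrite fh_S, E; simpl negb; cbn [andb step fst snd].
    + replace (m + -1)%Z with (m - 1)%Z by lia. rewrite Z.add_0_r.
      destruct (first_hit_L1 _ _ _ _ _); unfold path_prob; simpl; ring.
    + destruct (first_hit_L1 l (m + 1) (n + 1) T w); unfold path_prob; simpl; ring.
Qed.

Lemma ht_0 I l m n : hit_term I l m n 0 = if inL1 (m,n) then 1 else 0.
Proof. unfold hit_term. simpl. unfold first_hit_L1. change (Defs.pos m n [] 0) with (m,n). simpl forallb. rewrite andb_true_r. destruct (inL1 (m,n)); unfold path_prob; simpl; ring. Qed.

Definition V (I : R) (l m n : Z) : R :=
  if Z.eqb m (-1) then 1 else if Z.eqb n l then 0 else W I (Z.to_nat m) (Z.to_nat (l - n)).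

Lemma main_ind I l : forall mu m n, (Z.to_nat (2 * (l - n) + m + 1) < mu)%nat -> (-1 <= m)%Z -> (n <= l)%Z ->
  is_series (hit_term I l m n) (V I l m n).
Proof.
  induction mu as [|mu IH]; intros m n Hmu Hm Hn; [lia|].
  destruct (Z.eq_dec m (-1)) as [->|Hm1].
  - unfold V. simpl Z.eqb. cbv iota.
    replace 1 with (hit_term I l (-1) n 0 + 0) by (rewrite ht_0; simpl; ring).
    apply is_series_cons. apply is_series_ext with (2 := is_series_zero).
    intro k. rewrite ht_S. reflexivity.
  - destruct (Z.eq_dec n l) as [->|Hnl].
    + unfold V. rewrite (proj2 (Z.eqb_neq m (-1)) Hm1), Z.eqb_refl.
      apply is_series_ext with (2 := is_series_zero).
      intros [|k].
      * rewrite ht_0. unfold inL1. simpl. rewrite (proj2 (Z.eqb_neq m (-1)) Hm1). reflexivity.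
      * rewrite ht_S. unfold inL2. simpl. rewrite Z.eqb_refl, orb_true_r. reflexivity.
    + assert (H1 := IH (m - 1)%Z n ltac:(lia) ltac:(lia) ltac:(lia)).
      assert (H2 := IH (m + 1)%Z (n + 1)%Z ltac:(lia) ltac:(lia) ltac:(lia)).
      assert (Hv : V I l m n = hit_term I l m n 0 + (I * V I l (m - 1) n + (1 - I) * V I l (m + 1) (n + 1))).
      2:{ rewrite Hv. apply is_series_cons. apply (is_series_lin _ _ _ _ _ _ _ H1 H2).
          intro k. rewrite ht_S. unfold inL1, inL2. simpl.
          rewrite (proj2 (Z.eqb_neq m (-1)) Hm1), (proj2 (Z.eqb_neq n l) Hnl). reflexivity. }
      rewrite ht_0. unfold inL1. simpl. rewrite (proj2 (Z.eqb_neq m (-1)) Hm1).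
      unfold V. rewrite (proj2 (Z.eqb_neq m (-1)) Hm1), (proj2 (Z.eqb_neq n l) Hnl).
      rewrite (proj2 (Z.eqb_neq (m + 1) (-1)) ltac:(lia)).
      assert (V2 : (if Z.eqb (n + 1) l then 0 else W I (Z.to_nat (m + 1)) (Z.to_nat (l - (n + 1))))
                   = W I (S (Z.to_nat m)) (Z.to_nat (l - (n + 1)))).
      { destruct (Z.eqb_spec (n + 1) l).
        - replace (Z.to_nat (l - (n + 1))) with 0%nat by lia. reflexivity.
        - f_equal. lia. }
      rewrite V2. replace (Z.to_nat (l - n)) with (S (Z.to_nat (l - (n + 1)))) by lia.
      destruct (Z.eqb_spec (m - 1) (-1)) as [Hm0|Hm0].
      * replace (Z.to_nat m) with 0%nat by lia. rewrite W0. ring.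
      * replace (Z.to_nat m) with (S (Z.to_nat (m - 1))) by lia. rewrite WS. ring.
Qed.

Theorem theorem1 (I : R) (l m n : Z) :
  0 <= I < 1 -> (1 <= l)%Z -> (-1 <= m)%Z -> (0 <= n <= l)%Z ->
  ((0 <= m)%Z -> (n < l)%Z ->
     Q I l m n =
     rsum 0 (Z.to_nat (l - n - 1))
       (fun i => coef_a i (Z.to_nat m) * (1 - I) ^ i * I ^ (Z.to_nat m + 1 + i)))
  /\ (m = (-1)%Z -> (n < l)%Z -> Q I l m n = 1)
  /\ ((0 < m)%Z -> n = l -> Q I l m n = 0).
Proof.
  intros HI Hl Hm Hn.
  assert (HQ : Q I l m n = V I l m n).
  { unfold Q. apply is_series_unique. apply (main_ind I l (S (Z.to_nat (2 * (l - n) + m + 1)))); lia. }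
  rewrite HQ. unfold V. split; [|split].
  - intros Hm0 Hnl. rewrite (proj2 (Z.eqb_neq m (-1)) ltac:(lia)), (proj2 (Z.eqb_neq n l) ltac:(lia)).
    unfold rsum. replace (S (Z.to_nat (l - n - 1)) - 0)%nat with (Z.to_nat (l - n)) by lia.
    rewrite fr_seq. unfold W. apply sN_ext. intro i. rewrite coef_B. reflexivity.
  - intros -> _. reflexivity.
  - intros Hm0 ->. rewrite (proj2 (Z.eqb_neq m (-1)) ltac:(lia)), Z.eqb_refl. reflexivity.
Qed.
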